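(* Let $G=(V,E)$ be a strongly connected digraph and $s\in V$. Let $r$ be a marked vertex and let $v$ be a vertex that is not a descendant of $r$ in $D(s)$. Then there is a path in $G$ from $v$ to $r$ that contains no vertex of $T(r)\setminus\{r\}$. Moreover, every simple path in $G$ from $v$ to any vertex of $T(r)$ contains the edge $(d(r),r)$.
   Context: For a digraph $G=(V,E)$ and $s\in V$ with every vertex reachable from $s$, $G(s)$ is the flow graph with start vertex $s$; $u$ dominates $w$ if every path from $s$ to $w$ contains $u$; the dominator tree $D(s)$ is the rooted tree on $V$ with root $s$ in which $u$ is an ancestor of $w$ iff $u$ dominates $w$; $d(w)$ is the parent of $w\neq s$. An edge $(u,w)$ is a bridge of $G(s)$ if every path from $s$ to $w$ contains it (then $u=d(w)$). A vertex $w\neq s$ is marked if $(d(w),w)$ is a bridge of $G(s)$. Deleting from $D(s)$ all edges $(d(w),w)$ with $w$ marked decomposes $D(s)$ into a forest of subtrees, each rooted at $s$ or at a marked vertex; $T(v)$ denotes the subtree containing $v$. *)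

(* Defs.v *)
From mathcomp Require Import all_boot.
Set Implicit Arguments. Unset Strict Implicit. Unset Printing Implicit Defensive.

Section Dom.
Variables (V : finType) (e : rel V).

Definition gpath (x y : V) (p : seq V) : bool := path e x p && (last x p == y).

Definition uses_edge (x : V) (p : seq V) (u w : V) : bool :=
  (u, w) \in zip (x :: p) p.

Definition dominates (s u w : V) : Prop :=
  forall p, gpath s w p -> u \in s :: p.

(* u = d(w): immediate dominator (parent of w in the dominator tree D(s)) *)
Definition idom (s u w : V) : Prop :=
  u != w /\ dominates s u w /\ (forall x, dominates s x w -> x != w -> dominates s x u).

Definition bridge (s u w : V) : Prop :=
  e u w /\ forall p, gpath s w p -> uses_edge s p u w.

Definition marked (s w : V) : Prop :=
  w != s /\ exists u, idom s u w /\ bridge s u w.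

(* x belongs to T(r) for r a marked vertex (or r = s): r is an ancestor of x in
   D(s) and no marked vertex other than r lies on the tree path from r to x. *)
Definition inT (s r x : V) : Prop :=
  dominates s r x /\
  forall y, marked s y -> dominates s r y -> dominates s y x -> y = r.

End Dom.

(* Main.v *)
Require Import Defs.
From mathcomp Require Import all_boot.
From Stdlib Require Import Classical.

Set Implicit Arguments.
Section Helpers.
Context {V : finType} {e : rel V}.

Lemma gpath_cat {x y z p q} : gpath e x y p -> gpath e y z q -> gpath e x z (p ++ q).
Proof.
rewrite /gpath cat_path last_cat => /andP[hp /eqP->] /andP[hq hl].
by rewrite hp hq.
Qed.

Lemma zip_cat_last (x : V) a b :
  zip (x :: a ++ b) (a ++ b) = zip (x :: a) a ++ zip (last x a :: b) b.
Proof. by elim: a x => [|y a IH] x //=; rewrite IH. Qed.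

Lemma in_zip_r (a b : V) l1 l2 : (a, b) \in zip l1 l2 -> b \in l2.
Proof.
elim: l1 l2 => [|y l1 IH] [|z l2] //=; rewrite inE => /orP[/eqP[_ ->]|/IH H].
  by rewrite inE eqxx.
by rewrite inE H orbT.
Qed.

Lemma dom_self s w : dominates e s w w.
Proof. by move=> p /andP[_ /eqP <-]; exact: mem_last. Qed.

Lemma dom_antisym s a b : (forall x y, connect e x y) ->
  dominates e s a b -> dominates e s b a -> a = b.
Proof.
move=> conn; case/connectP: (conn s b) => p0 pp0 ->.
case: (shortenP pp0) => p pp up _ dab dba.
have ain : a \in s :: p by apply: dab; rewrite /gpath pp eqxx.
move: pp up dba; case/splitPl: ain => p1 p2 la.
rewrite cat_path => /andP[pp1 _] up dba.
have bin := dba p1 (introT andP (conj pp1 (introT eqP la))).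
move: bin; rewrite last_cat la; case: p2 up {dba} => [|y p2] //= up bin.
have up2 : uniq ((s :: p1) ++ y :: p2) by []. move: up2; rewrite cat_uniq => /and3P[_ H _].
exfalso; move/negP: H; apply; apply/hasP; exists (last y p2); first exact: mem_last.
by [].
Qed.

Lemma idom_uniq s u u0 r : (forall x y, connect e x y) ->
  idom e s u r -> idom e s u0 r -> u = u0.
Proof.
move=> conn [ur [dur hu]] [u0r [du0r hu0]].
apply: (@dom_antisym s _ _ conn).
- exact: hu0 _ dur ur.
- exact: hu _ du0r u0r.
Qed.

End Helpers.
Unset Implicit Arguments.

Theorem mainTheorem7 (V : finType) (e : rel V) (s r v : V) :
  (forall x y : V, connect e x y) ->
  marked e s r ->
  ~ dominates e s r v ->
  (exists p : seq V, gpath e v r p /\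
     forall x, x \in v :: p -> inT e s r x -> x = r) /\
  (forall (p : seq V) (z : V), gpath e v z p -> uniq (v :: p) -> inT e s r z ->
     forall u, idom e s u r -> uses_edge v p u r).
Proof.
move=> conn [rs [u0 [idu0 [eu0 br]]]] ndv.
have [ps [gps nr]] : exists ps, gpath e s v ps /\ r \notin s :: ps.
  apply: NNPP => H; apply: ndv => p gp; apply: NNPP => H2; apply: H.
  by exists p; split=> //; apply/negP.
have key : forall q w ws, path e w q -> last w q = r -> gpath e s w ws ->
    r \notin s :: ws ->
    exists p, gpath e w r p /\ forall x, x \in w :: p -> dominates e s r x -> x = r.
  elim=> [|y q IH] w ws /=.
    move=> _ wr /andP[_ /eqP lw] nrw; exfalso; move/negP: nrw; apply.
    by rewrite -wr -lw mem_last.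
  move=> /andP[ewy py] ly gws nrw.
  have ndw : ~ dominates e s r w := fun H => (negP nrw) (H ws gws).
  have gwy : gpath e w y [:: y] by rewrite /gpath /= ewy eqxx.
  case: (classic (dominates e s r y)) => dy.
    have yr : y = r.
      have := dy _ (gpath_cat gws gwy).
      by rewrite -cat_cons mem_cat (negbTE nrw) /= inE => /eqP.
    exists [:: y]; split; first by rewrite -yr.
    by move=> x; rewrite !inE => /orP[/eqP->|/eqP->] dx.

  have nry : r \notin s :: ws ++ [:: y].
    rewrite -cat_cons mem_cat (negbTE nrw) /= inE; apply/eqP => ry.
    by apply: dy; rewrite -ry; exact: dom_self.
  have [p [gp hp]] := IH y _ py ly (gpath_cat gws gwy) nry.
  exists (y :: p); split.
    by move: gp; rewrite /gpath /= ewy.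
  move=> x; rewrite inE => /orP[/eqP->|]; first by move=> H; case: ndw.
  exact: hp.
split.
  case/connectP: (conn v r) => q pq lq.
  have [p [gp hp]] := key q v ps pq (esym lq) gps nr.
  exists p; split=> // x xin [dx _]; exact: hp x xin dx.
move=> p z gp _ [dz _] u idu.
have -> : u = u0 := idom_uniq conn idu idu0.
have rp : r \in p.
  have := dz _ (gpath_cat gps gp).
  by rewrite -cat_cons mem_cat (negbTE nr).
move/andP: gp => [pp _].
move: pp; case/splitPr: rp => p1 p2.
rewrite cat_path => /andP[pp1 /= /andP[elr _]].
have gvr : gpath e v r (p1 ++ [:: r]).
  by rewrite /gpath cat_path pp1 /= elr last_cat /= eqxx.
have := br _ (gpath_cat gps gvr).
rewrite /uses_edge zip_cat_last mem_cat => /orP[/in_zip_r H|].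
  by exfalso; move/negP: nr; apply; rewrite inE H orbT.
move/andP: gps => [_ /eqP ->] H.
have -> : p1 ++ r :: p2 = (p1 ++ [:: r]) ++ p2 by rewrite -catA.
by rewrite zip_cat_last mem_cat H.
Qed.
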